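(* For every real $M\ge 0$ and positive integers $N$ and $K$, with $\mathcal{N}=\{1,\dots,N\}$, \[ R(M,N,K)\le 72\,\bar{R}(M,\mathcal{N},K). \]
   Context: Caching problem: a server holds $N$ files of $F$ bits each, connected through a shared error-free link to $K$ users each with a cache of $MF$ bits. In the placement phase each user stores an arbitrary function of the files of at most $MF$ bits; in the delivery phase each user requests a file, the server sends a message over the shared link, and each user must reconstruct its requested file from the message and its cache. The rate for a demand vector is message length divided by $F$. $\bar{R}(M,\mathcal{N},K)$ is the optimal expected rate (infimum over all schemes of the expected rate, achievable with vanishing error probability for all large $F$) when the $K$ demands are i.i.d. uniform over $\mathcal{N}$. The function $R$ is defined by $R(M,N,K)=(1-M/N)\min\{\tfrac{N}{M}(1-(1-M/N)^K),N\}$ for $M\in(0,N]$, $R(0,N,K)=\min\{N,K\}$, and $R(M,N,K)=0$ for $M>N$. *)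

(* Defs.v *)
From HB Require Import structures.
From mathcomp Require Import all_boot all_order all_algebra.
From mathcomp Require Import boolp classical_sets reals.
 Unset Printing Implicit Defensive.
Import Order.TTheory GRing.Theory Num.Theory.
Local Open Scope ring_scope.
Local Open Scope classical_set_scope.

Definition files (N F : nat) := {ffun 'I_N -> F.-tuple bool}.
Definition demands (N K : nat) := {ffun 'I_K -> 'I_N}.

(** A caching scheme for N files of F bits, K users, caches of c bits.
    - [cache k W] : content of user k's cache (arbitrary function of the files);
    - [len d]     : length in bits of the message sent for demand vector d;
    - [enc d W]   : message sent over the shared link for demand d;
    - [dec d k X Z] : user k's estimate of its requested file W (d k) from the
                      message X and its cache content Z (demand d is known). *)
Record scheme (N K F c : nat) := Scheme {
  cache : 'I_K -> files N F -> c.-tuple bool;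
  len : demands N K -> nat;
  enc : forall d : demands N K, files N F -> (len d).-tuple bool;
  dec : forall d : demands N K, 'I_K -> (len d).-tuple bool -> c.-tuple bool ->
        F.-tuple bool }.

Section SchemeDefs.
Variable R : realType.
Variables N K F c : nat.
Implicit Type S : scheme N K F c.

(** Probability (files i.i.d. uniform) that, for demand d, some user decodes
    its requested file incorrectly. *)
Definition err_prob S (d : demands N K) : R :=
  #|[set W : files N F | [exists k : 'I_K,
       @dec _ _ _ _ S d k (@enc _ _ _ _ S d W) (@cache _ _ _ _ S k W) != W (d k)]]|%:R
  / #|{: files N F}|%:R.

(** Expected rate when the demands are i.i.d. uniform over the N files:
    average over all demand vectors of (message length)/F. *)
Definition exp_rate S : R :=
  (\sum_(d : demands N K) (@len _ _ _ _ S d)%:R / F%:R) / #|{: demands N K}|%:R.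
End SchemeDefs.

Definition achievable (R : realType) (M : R) (N K : nat) (r : R) : Prop :=
  forall eps : R, 0 < eps ->
  exists F0 : nat, forall F : nat, (F0 <= F)%N ->
  exists c : nat, c%:R <= M * F%:R /\
  exists S : scheme N K F c,
    @exp_rate R _ _ _ _ S <= r /\ forall d : demands N K, @err_prob R _ _ _ _ S d < eps.

Definition Rbar (R : realType) (M : R) (N K : nat) : R :=
  inf [set r | @achievable R M N K r].

Definition Rfun (R : realType) (M : R) (N K : nat) : R :=
  if M == 0 then Num.min N%:R K%:R
  else if M <= N%:R then
    (1 - M / N%:R) * Num.min (N%:R / M * (1 - (1 - M / N%:R) ^+ K)) N%:R
  else 0.

(* Main.v *)
Require Import Defs.
From HB Require Import structures.
From mathcomp Require Import all_boot all_order all_algebra.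
From mathcomp Require Import boolp classical_sets reals.
From mathcomp Require Import fintype finset bigop.
From mathcomp Require Import zify ring lra.
Import Order.TTheory GRing.Theory Num.Theory.
Set Implicit Arguments. Unset Strict Implicit. Unset Printing Implicit Defensive.
Local Open Scope ring_scope.


Lemma card_bigcup_le (T : finType) m (E : 'I_m -> {set T}) :
  (#|\bigcup_(i < m) E i| <= \sum_(i < m) #|E i|)%N.
Proof.
apply: (big_ind2 (fun (A : {set T}) (n : nat) => #|A| <= n)%N) => //.
- by rewrite cards0.
- move=> A a B b hA hB; apply: leq_trans (leq_card_setU A B) _.
  exact: leq_add.
Qed.

Section Core.
Variables (N' K F c s m : nat) (hs : (s <= K)%N).
Local Notation N := N'.+1.
Variable S : scheme N K F c.
Local Notation cacheS := (@cache _ _ _ _ S).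
Local Notation encS := (@enc _ _ _ _ S).
Local Notation decS := (@dec _ _ _ _ S).
Local Notation lenS := (@len _ _ _ _ S).

Definition shift (i : nat) (d : demands N K) : demands N K :=
  [ffun k => d k + inord i].

Definition errset (d : demands N K) : {set files N F} :=
  [set W | [exists k, decS d k (encS d W) (cacheS k W) != W (d k)]].

Definition Dset (d : demands N K) : {set 'I_N} :=
  [set j | [exists k : 'I_s, exists i : 'I_m, j == shift i d (widen_ord hs k)]].

Lemma core d :
  (2 * #|\bigcup_(i < m) errset (shift i d)| < #|{: files N F}|)%N ->
  (F * #|Dset d| <= s * c + \sum_(i < m) lenS (shift i d))%N.
Proof.
move=> hbad.
set Bad := \bigcup_(i < m) _ in hbad.
set G := ~: Bad.
pose def : F.-tuple bool := [tuple of nseq F false].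
pose f (W : files N F) :=
  (([ffun k : 'I_s => cacheS (widen_ord hs k) W],
    [ffun i : 'I_m => encS (shift i d) W] : {dffun forall i : 'I_m, (lenS (shift i d)).-tuple bool}),
   ([ffun j => if j \in Dset d then def else W j] : {dffun forall j : 'I_N, F.-tuple bool})).
have finj : {in G &, injective f}.
  move=> W1 W2; rewrite !inE => hW1 hW2 [hc hm hr].
  apply/ffunP => j.
  case: (boolP (j \in Dset d)) => hj; last first.
    by move/ffunP: hr => /(_ j); rewrite !ffunE (negbTE hj).
  move: hj; rewrite inE => /existsP [k /existsP [i /eqP ->]].
  have g1 : W1 \notin errset (shift i d).
    by apply: contra hW1 => h; apply/bigcupP; exists i.
  have g2 : W2 \notin errset (shift i d).
    by apply: contra hW2 => h; apply/bigcupP; exists i.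
  move: g1 g2; rewrite !inE !negb_exists => /forallP /(_ (widen_ord hs k)) /negPn /eqP <-.
  move=> /forallP /(_ (widen_ord hs k)) /negPn /eqP <-.
  move/ffunP: hc => /(_ k); rewrite !ffunE => ->.
  by move/ffunP: hm => /(_ i); rewrite !ffunE => ->.
pose Ar := fun j : 'I_N => if j \in Dset d then [set def] else [set: F.-tuple bool].
have sub : f @: G \subset setX (setX [set: {ffun 'I_s -> c.-tuple bool}]
        (setXn (fun i : 'I_m => [set: (lenS (shift i d)).-tuple bool]))) (setXn Ar).
  apply/subsetP => x /imsetP [W _ ->].
  rewrite !inE /=; apply/andP; split; apply/forallP => j; rewrite ?inE //.
  by rewrite /Ar ffunE; case: ifP => _; rewrite !inE.
have := subset_leq_card sub.
rewrite card_in_imset // !cardsX cardsT cardsXn card_ffun !card_tuple card_bool card_ord.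
rewrite cardsXn.
under eq_bigr do rewrite cardsT card_tuple card_bool.
rewrite -expn_sum.
rewrite (eq_bigr (fun j => if j \in Dset d then 1 else 2 ^ F)%N); last first.
  by move=> j _; rewrite /Ar; case: ifP => _; rewrite ?cards1 // cardsT card_tuple card_bool.
have -> : (\prod_j (if j \in Dset d then 1 else 2 ^ F) = \prod_j (if j \in ~: Dset d then 2 ^ F else 1))%N.
  by apply: eq_bigr => j _; rewrite in_setC; case: (j \in Dset d).
rewrite -big_mkcond prod_nat_const.
have hC := cardsC (Dset d); rewrite card_ord in hC.
have hB := cardsC Bad.
rewrite card_ffun card_tuple card_bool card_ord in hB hbad.
rewrite -/G => hG.
have h1 : (2 ^ (F * N) < 2 ^ (c * s + \sum_(i < m) lenS (shift i d) + F * #|~: Dset d|).+1)%N.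
  rewrite expnS !expnD !expnM.
  move: hG hB hbad; rewrite /G.
  move: (#|Bad|) (#|~: Bad|) => a b hG hB hb.
  apply: (leq_trans _ (leq_mul (leqnn 2) hG)); lia.
rewrite ltn_exp2l // in h1.
nia.
Qed.

Lemma prod_split (f : 'I_K -> nat) a b :
  (forall k : 'I_K, f k = if (k < s)%N then a else b) ->
  (\prod_k f k = a ^ s * b ^ (K - s))%N.
Proof.
move=> hf; rewrite (eq_bigr _ (fun k _ => hf k)).
rewrite -(big_mkord xpredT (fun k => if (k < s)%N then a else b)).
rewrite (big_cat_nat (leq0n s) hs) /=.
rewrite (eq_big_nat _ _ (F2 := fun=> a)); last by move=> i /andP [_ ->].
rewrite [X in (_ * X)%N](eq_big_nat _ _ (F2 := fun=> b)); last by move=> i /andP [h _]; case: ifP => // h2; lia.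
by rewrite !prod_nat_const_nat subn0.
Qed.

Lemma cardJ (hm : (m <= N)%N) (j : 'I_N) :
  #|[set x : 'I_N | [forall i : 'I_m, j != x + inord i]]| = (N - m)%N.
Proof.
have -> : [set x : 'I_N | [forall i : 'I_m, j != x + inord i]] =
          ~: [set j - inord i | i : 'I_m].
  apply/setP => x; rewrite !inE; apply/forallP/idP.
    move=> h; apply/imsetP => [[i _ hx]]; have := h i.
    by rewrite hx subrK eqxx.
  move=> h i; apply/negP => /eqP hj; apply: (negP h); apply/imsetP; exists i => //.
  by rewrite hj addrK.
have hc := cardsC [set j - inord i | i : 'I_m]; rewrite card_ord in hc.
rewrite card_imset in hc; last first.
  move=> i1 i2 /addrI /oppr_inj h; apply: val_inj.
  have h1 : (i1 < N)%N := leq_trans (ltn_ord i1) hm.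
  have h2 : (i2 < N)%N := leq_trans (ltn_ord i2) hm.
  by move: (congr1 (@nat_of_ord _) h); rewrite !inordK.
rewrite card_ord in hc; by apply/eqP; rewrite -(eqn_add2l m) subnKC // hc.
Qed.

Lemma sumD (hm : (m <= N)%N) :
  (\sum_(d : demands N K) #|Dset d| = N * (N ^ K - (N - m) ^ s * N ^ (K - s)))%N.
Proof.
under eq_bigr do rewrite -sum1_card big_mkcond /=.
rewrite exchange_big /=.
rewrite (eq_bigr (fun=> (N ^ K - (N - m) ^ s * N ^ (K - s))%N)).
  by rewrite big_const_ord iter_addn_0 mulnC.
move=> j _; rewrite -big_mkcond /= sum1dep_card.
pose P := fun k : 'I_K => [set x : 'I_N | (k < s)%N ==> [forall i : 'I_m, j != x + inord i]].
have hc := cardsC [set d : demands N K | j \in Dset d].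
rewrite card_ffun !card_ord in hc.
have e : ~: [set d : demands N K | j \in Dset d] = [set d | d \in family P].
  apply/setP => d; rewrite !inE; apply/idP/familyP.
    move=> h k; rewrite inE; apply/implyP => hk; apply/forallP => i.
    apply: contra h => /eqP e; apply/existsP; exists (Ordinal hk); apply/existsP; exists i.
    by rewrite ffunE e /=; apply/eqP; congr (_ + _); congr (d _); apply: val_inj.
  move=> h; apply/negP => /existsP [k /existsP [i /eqP e]].
  have := h (widen_ord hs k); rewrite inE /= (ltn_ord k) /= => /forallP /(_ i).
  by rewrite e ffunE eqxx.
have hf : #|[set d : demands N K | d \in family P]| = ((N - m) ^ s * N ^ (K - s))%N.
  rewrite (@eq_card _ _ (family P)); last by move=> d; rewrite inE.
  rewrite card_family foldrE big_map big_enum /=.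
  apply: prod_split => k; rewrite /P; case: ifP => hk.
    by rewrite -(cardJ hm j); apply: eq_card => x; rewrite !inE ?hk.
  by rewrite -[RHS]card_ord; apply: eq_card => x; rewrite !inE ?hk.
rewrite e hf in hc; apply/eqP; rewrite -(eqn_add2r ((N - m) ^ s * N ^ (K - s))%N) hc subnK //; by rewrite -hc leq_addl.
Qed.

Lemma shift_inj i : injective (shift i).
Proof.
move=> d1 d2 h; apply/ffunP => k.
by move/ffunP: h => /(_ k); rewrite !ffunE => /addIr.
Qed.

Lemma avg (hm : (m <= N)%N)
  (hbad : forall d, (2 * #|\bigcup_(i < m) errset (shift i d)| < #|{: files N F}|)%N) :
  (F * (N * (N ^ K - (N - m) ^ s * N ^ (K - s))) <=
   N ^ K * (s * c) + m * \sum_(d : demands N K) lenS d)%N.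
Proof.
rewrite -sumD // big_distrr /=.
apply: (@leq_trans (\sum_(d : demands N K) (s * c + \sum_(i < m) lenS (shift i d)))%N).
  by apply: leq_sum => d _; apply: core.
rewrite big_split /= big_const iter_addn_0 cardT -cardE card_ffun !card_ord mulnC leq_add2l.
rewrite exchange_big /=.
rewrite (eq_bigr (fun=> \sum_(d : demands N K) lenS d)).
  by rewrite big_const_ord iter_addn_0 mulnC.
move=> i _; exact: (esym (reindex_inj (@shift_inj i))).
Qed.
End Core.


Lemma expn_leq a b e : (a <= b)%N -> (a ^ e <= b ^ e)%N.
Proof. by move=> h; elim: e => // e IH; rewrite !expnS leq_mul. Qed.

Lemma lower (R : realType) (M : R) N' K s m r :
  (s <= K)%N -> (0 < m)%N -> (m <= N'.+1)%N -> 0 <= M ->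
  @achievable R M N'.+1 K r ->
  N'.+1%:R - N'.+1%:R * (1 - m%:R / N'.+1%:R) ^+ s - s%:R * M <= m%:R * r.
Proof.
move=> hs hm0 hmN hM ha.
set N := N'.+1.
have eps_pos : 0 < ((2 * m)%:R : R)^-1 by rewrite invr_gt0 ltr0n muln_gt0 hm0.
case: (ha _ eps_pos) => F0 hF.
have [c [hc [S [hrate herr]]]] := hF F0.+1 (leqnSn _).
set F := F0.+1 in hc S hrate herr *.
have hQf : (0 < #|{: files N F}|)%N.
  by rewrite card_ffun card_tuple card_bool !expn_gt0.
have hbad : forall d, (2 * #|\bigcup_(i < m) errset S (shift i d)| < #|{: files N F}|)%N.
  move=> d; apply: (leq_ltn_trans (leq_mul (leqnn 2) (card_bigcup_le _))).
  rewrite -(ltr_nat R) natrM natr_sum.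
  have he : forall i : 'I_m, (#|errset S (shift i d)|%:R : R) <
            ((2 * m)%:R)^-1 * #|{: files N F}|%:R.
    move=> i; have := herr (shift i d); rewrite /err_prob ltr_pdivrMr ?ltr0n //.
    rewrite (@eq_card _ _ (errset S (shift i d))); last first. move=> W; rewrite !inE. apply/idP/idP => [/asboolP //|h]; exact/asboolP.

    by [].
  apply: (@lt_le_trans _ _ (2 * \sum_(i < m) (((2 * m)%:R)^-1 * #|{: files N F}|%:R : R))).
    rewrite ltr_pM2l ?ltr0n //; apply: ltr_sum => //.
    by apply/hasP; exists (Ordinal hm0) => //; rewrite mem_index_enum.
  rewrite sumr_const card_ord -mulr_natr natrM.
  have hm' : (m%:R : R) != 0 by rewrite pnatr_eq0 -lt0n.
  set Q := (#|{: files N F}|%:R : R).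
  rewrite (_ : 1 * 2 * ((2 * m%:R)^-1 * Q *+ m) = Q) //.
  by rewrite -mulr_natr; field.
have key := avg hs hmN hbad.
have hXQ : ((N - m) ^ s * N ^ (K - s) <= N ^ K)%N.
  by rewrite -{2}(subnKC hs) expnD leq_mul2r expn_leq ?leq_subr ?orbT.
have hNK : (N ^ K = N ^ s * N ^ (K - s))%N by rewrite -expnD subnKC.
rewrite -(ler_nat R) !natrM natrD !natrM natrB // in key.
rewrite hNK !natrM !natrX natrB // in key.
have hdem : #|{: demands N K}| = (N ^ s * N ^ (K - s))%N by rewrite card_ffun !card_ord hNK.
move: hrate; rewrite /exp_rate hdem natrM !natrX -mulr_suml -natr_sum.
move: key hc; rewrite -/N.
set a := (N%:R : R); set b := (m%:R : R); set y := (N%:R ^+ (K - s) : R).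
set f := (F%:R : R); set L := (\sum_(d : demands N K) len _ _ _ _ S d)%:R.
set P := a ^+ s * y.
move=> key hc hrate.
have ha0 : 0 < a by rewrite ltr0n.
have hf : 0 < f by rewrite ltr0n.
have hP : 0 < P by rewrite mulr_gt0 // exprn_gt0 // ltr0n.
have hL : L <= r * P * f.
  by move: hrate; rewrite ler_pdivrMr // ler_pdivrMr // mulrAC.
set u := (1 - b / a) ^+ s.
have hu : (a - b) ^+ s = u * a ^+ s.
  by rewrite /u -exprMn; congr (_ ^+ _); field; rewrite lt0r_neq0.
rewrite hu in key.
have hb : 0 <= b by rewrite ler0n.
have hs0 : 0 <= (s%:R : R) by rewrite ler0n.
have h1 : P * s%:R * c%:R <= P * s%:R * (M * f).
  by rewrite ler_wpM2l // mulr_ge0 // ltW.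
have h2 : b * L <= b * (r * P * f) by rewrite ler_wpM2l.
have h : (f * P) * (a - a * u - s%:R * M) <= (f * P) * (b * r).
  rewrite /P in key h1 h2 *; lra.
by move: h; rewrite ler_pM2l // mulr_gt0.
Qed.


Section RealFacts.
Variable R : realType.

Lemma bern (a : R) K : 0 <= a <= 1 -> 1 - K%:R * a <= (1 - a) ^+ K.
Proof.
move=> /andP [h0 h1]; elim: K => [|K IH]; first by rewrite mul0r subr0 expr0.
rewrite exprSr.
have h2 : 0 <= 1 - a by lra.
have := ler_wpM2r h2 IH.
have : 0 <= (K%:R : R) by rewrite ler0n.
rewrite -natr1; nra.
Qed.

Lemma pow01 (a : R) K : 0 <= a <= 1 -> 0 <= (1 - a) ^+ K <= 1.
Proof.
move=> /andP [h0 h1]; apply/andP; split; first by apply: exprn_ge0; lra.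
by apply: exprn_ile1; lra.
Qed.

Lemma powbound (x : R) s : 0 <= x <= 1 -> (1 - x) ^+ s * (1 + s%:R * x) <= 1.
Proof.
move=> /andP [h0 h1]; elim: s => [|s IH]; first by rewrite expr0 mul0r addr0 mulr1.
have hp : 0 <= (1 - x) ^+ s by apply: exprn_ge0; lra.
rewrite exprSr -natr1.
have e : (1 - x) * (1 + (s%:R + 1) * x) <= 1 + s%:R * x.
  have : 0 <= (s%:R : R) by rewrite ler0n.
  nra.
have := ler_wpM2l hp e.
rewrite mulrA. lra.
Qed.

Lemma Rfun_le (M : R) N K : (0 < N)%N -> 0 <= M ->
  [/\ Rfun R M N K <= K%:R, Rfun R M N K <= N%:R,
      0 < M -> Rfun R M N K <= N%:R / M &
      0 < M -> M <= N%:R -> Rfun R M N K <= (1 - M / N%:R) * (N%:R / M)].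
Proof.
move=> hN hM.
have hN' : 0 < (N%:R : R) by rewrite ltr0n.
rewrite /Rfun; case: eqP => [->|hM0].
  by constructor; rewrite ?ltxx // ge_min lexx ?orbT.
have hMp : 0 < M by rewrite lt_neqAle eq_sym; apply/andP; split=> //; apply/eqP.
case: (boolP (M <= N%:R)) => hMN; last first.
  by constructor; rewrite ?ler0n // => *; rewrite divr_ge0 // ltW.
set a := M / N%:R.
have ha : 0 <= a <= 1.
  apply/andP; split; [apply: divr_ge0; [exact: ltW|exact: ltW] | by rewrite /a ler_pdivrMr // mul1r].
have [p0 p1] := andP (pow01 K ha).
have hb := bern K ha.
have h1a : 0 <= 1 - a <= 1 by move: ha => /andP [? ?]; lra.
have [q0 q1] := andP h1a.
have hNM : 0 <= N%:R / M by rewrite divr_ge0 // ltW.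
have hNMa : N%:R / M * a = 1 by rewrite /a; field; rewrite ?lt0r_neq0.
have X1 : N%:R / M * (1 - (1 - a) ^+ K) <= K%:R.
  have : N%:R / M * (1 - (1 - a) ^+ K) <= N%:R / M * (K%:R * a).
    by apply: ler_wpM2l => //; lra.
  by rewrite mulrCA hNMa mulr1.
have X2 : N%:R / M * (1 - (1 - a) ^+ K) <= N%:R / M.
  by rewrite -[leRHS]mulr1; apply: ler_wpM2l => //; lra.
set mn := Num.min _ _.
have hmn1 : mn <= K%:R by rewrite ge_min X1.
have hmn2 : mn <= N%:R by rewrite ge_min lexx orbT.
have hmn3 : mn <= N%:R / M by rewrite ge_min X2.
have hmn0 : 0 <= mn by rewrite le_min (ltW hN') andbT mulr_ge0 //; lra.
constructor.
- by apply: le_trans (ler_wpM2l q0 hmn1) _; rewrite ler_piMl ?ler0n.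
- by apply: le_trans (ler_wpM2l q0 hmn2) _; rewrite ler_piMl ?ler0n // ltW.
- by move=> _; apply: le_trans (ler_wpM2l q0 hmn3) _; rewrite ler_piMl.
- by move=> _ _; apply: ler_wpM2l.
Qed.
End RealFacts.


Section Trivial.
Variables (N K F : nat).
Lemma hcardT : #|{: files N F}| = #|{: (F * N).-tuple bool}|.
Proof. by rewrite card_ffun !card_tuple card_bool card_ord expnM. Qed.

Definition tenc (W : files N F) : (F * N).-tuple bool :=
  enum_val (cast_ord hcardT (enum_rank W)).
Definition tdec (X : (F * N).-tuple bool) : files N F :=
  enum_val (cast_ord (esym hcardT) (enum_rank X)).
Lemma tencK : cancel tenc tdec.
Proof. by move=> W; rewrite /tdec /tenc enum_valK cast_ordK enum_rankK. Qed.

Definition tscheme : scheme N K F 0 :=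
  @Scheme N K F 0 (fun _ _ => [tuple]) (fun _ => (F * N)%N) (fun _ W => tenc W)
    (fun d k X _ => tdec X (d k)).
End Trivial.

Lemma achN (R : realType) (M : R) N K : 0 <= M -> @achievable R M N K N%:R.
Proof.
move=> hM eps he; exists 0%N => F _; exists 0%N; split.
  by rewrite mulr_ge0 // ler0n.
exists (tscheme N K F); split.
  rewrite /exp_rate; case: (posnP #|{: demands N K}|) => hQ.
    by rewrite hQ invr0 mulr0 ler0n.
  rewrite ler_pdivrMr ?ltr0n //.
  apply: (@le_trans _ _ (\sum_(d : demands N K) (N%:R : R))).
    apply: ler_sum => d _; rewrite /=.
    case: F => [|F]; first by rewrite mul0n mul0r ler0n.
    by rewrite natrM mulrAC mulfV ?mul1r // pnatr_eq0.
  by rewrite sumr_const mulr_natr.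
move=> d; rewrite /err_prob (_ : #|_| = 0%N) ?mul0r //.
apply: eq_card0 => W; rewrite /= inE; apply/negP => /asboolP /existsP [k].
by rewrite tencK eqxx.
Qed.

Lemma ach_ge0 (R : realType) (M : R) N K r : @achievable R M N K r -> 0 <= r.
Proof.
move=> ha; have [F0 hF] := ha 1 ltr01.
have [c [_ [S [hr _]]]] := hF F0 (leqnn _).
apply: le_trans hr; rewrite /exp_rate divr_ge0 ?ler0n //.
by apply: sumr_ge0 => d _; rewrite divr_ge0 ?ler0n.
Qed.

Lemma Rbar_ge (R : realType) (M : R) N K x : 0 <= M ->
  (forall r, @achievable R M N K r -> x <= r) -> x <= Rbar R M N K.
Proof.
move=> hM h; apply: lb_le_inf; first by exists N%:R; exact: achN.
by move=> r; exact: h.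
Qed.


Lemma Rfun0 (R : realType) (M : R) N K : N%:R < M -> Rfun R M N K = 0.
Proof.
move=> h; rewrite /Rfun.
have -> : (M == 0) = false by apply/negbTE; rewrite gt_eqF // (le_lt_trans _ h) ?ler0n.
by rewrite leNgt h.
Qed.

Theorem claim1 (R : realType) (M : R) (N K : nat) :
  0 <= M -> (0 < N)%N -> (0 < K)%N ->
  @Rfun R M N K <= 72 * @Rbar R M N K.
Proof.
move=> hM; case: N => // N' _ hK.
set N := N'.+1.
have [RK RN RNM RA] := Rfun_le K (ltn0Sn N') hM.
rewrite -/N in RK RN RNM RA.
have hN : 0 < (N%:R : R) by rewrite ltr0n.
have Rb0 : 0 <= Rbar R M N K by apply: Rbar_ge => // r; exact: ach_ge0.
case: (lerP N%:R (8 * M)) => hcase.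
  have hMp : 0 < M by lra.
  have Rb1 : 1 - M / N%:R <= Rbar R M N K.
    apply: Rbar_ge => // r ha.
    have := lower (s:=1%N) (m:=N) hK (ltn0Sn N') (leqnn _) hM ha.
    rewrite divff ?lt0r_neq0 // subrr expr1 mulr0 subr0 mul1r => h.
    rewrite -(ler_pM2l hN) mulrBr mulr1 mulrCA divff ?mulr1 ?lt0r_neq0 //.
  case: (lerP M N%:R) => hMN.
    apply: le_trans (RA hMp hMN) _.
    have h8 : N%:R / M <= 8 by rewrite ler_pdivrMr.
    have h1a : 0 <= 1 - M / N%:R by rewrite subr_ge0 ler_pdivrMr // mul1r.
    have := ler_wpM2l h1a h8 => H.
    lra.
  by rewrite Rfun0 // mulr_ge0.
set m := (Num.truncn (4 * M)).+1.
have h4M : 0 <= 4 * M by lra.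
have hm1 : 4 * M < m%:R by rewrite /m; exact: truncnS_gt.
have hm2 : m%:R <= 4 * M + 1.
  by rewrite /m -natr1 lerD2r truncn_le.
have hm0 : (0 < m)%N by [].
have hmN : (m <= N)%N.
  have : (m%:R : R) < N%:R + 1 by lra.
  by rewrite (natr1 N) ltr_nat ltnS.
set s := minn K (N %/ m).
have hs : (s <= K)%N by rewrite geq_minl.
have hq : (0 < N %/ m)%N by rewrite divn_gt0.
have hs0 : (0 < s)%N by rewrite leq_min hK hq.
have hsm : (s * m <= N)%N.
  apply: leq_trans (leq_divM N m); rewrite leq_mul2r geq_minr orbT //.
have Rb : s%:R / 4 <= Rbar R M N K.
  apply: Rbar_ge => // r ha.
  have h := lower hs hm0 hmN hM ha; rewrite -/N in h.
  set x := m%:R / N%:R in h.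
  have hmR : 0 < (m%:R : R) by rewrite ltr0n.
  have hx : 0 <= x <= 1.
    apply/andP; split; first by rewrite divr_ge0 // ltW.
    by rewrite ler_pdivrMr // mul1r ler_nat.
  have hsR : 0 <= (s%:R : R) by rewrite ler0n.
  have hy : s%:R * x <= 1.
    rewrite /x mulrA ler_pdivrMr // mul1r -natrM ler_nat //.
  have hNx : N%:R * (s%:R * x) = s%:R * m%:R.
    by rewrite /x; field; rewrite lt0r_neq0.
  have hP := powbound s hx.
  have [P0 P1] := andP (pow01 s hx).
  set P := (1 - x) ^+ s in h hP P0 P1.
  have hPy : 1 - P >= s%:R * x / 2 by nra.
  have hsM : s%:R * M <= s%:R * m%:R / 4.
    by rewrite -mulrA ler_wpM2l //; lra.
  have h2 : N%:R * (1 - P) >= s%:R * m%:R / 2.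
    rewrite -hNx -mulrA; apply: ler_wpM2l; lra.
  have h3 : s%:R * m%:R / 4 <= m%:R * r by move: h; set (w := m%:R * r); nra.
  rewrite -(ler_pM2l hmR); lra.
have Rs : Rfun R M N K <= 18 * s%:R.
  case: (leqP K (N %/ m)) => hKq.
    have -> : s = K by apply/minn_idPl.
    apply: le_trans RK _.
    have : 0 <= (K%:R : R) by rewrite ler0n.
    lra.
  have -> : s = (N %/ m)%N by apply/minn_idPr; exact: ltnW.
  set q := (N %/ m)%N.
  have hN2 : (N < q.+1 * m)%N by rewrite ltn_ceil.
  have hN3 : N%:R < 2 * q%:R * m%:R :> R.
    have : (N < (2 * q) * m)%N.
      apply: leq_trans hN2 _; rewrite leq_mul2r; apply/orP; right; lia.
    by rewrite -(ltr_nat R) !natrM.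
  have hqR : 1 <= (q%:R : R) by rewrite ler1n.
  case: (lerP M (4^-1)) => hM4.
    apply: le_trans RN _.
    have : 2 * q%:R * m%:R <= 2 * q%:R * 2 :> R.
      apply: ler_wpM2l; [rewrite mulr_ge0 ?ler0n //| lra].
    lra.
  have hMp : 0 < M by lra.
  apply: le_trans (RNM hMp) _.
  rewrite ler_pdivrMr //.
  have : 2 * q%:R * m%:R <= 2 * q%:R * (8 * M) :> R.
    apply: ler_wpM2l; [rewrite mulr_ge0 ?ler0n //| lra].
  have : 0 <= q%:R * M by rewrite mulr_ge0 ?ler0n // ltW.
  lra.
lra.
Qed.
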